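(* Let $p\in\mathcal M_1^+$. If $\limsup_{k\to\infty}\sqrt[k]{p_k}<1$, then all coefficients $a(p)_k=\frac{1}{k+1}\sum_{\ell\ge k}\binom{\ell}{k}p_\ell$ are finite and $a(p)\in X_{\alpha,\delta}$ with $\alpha=a(p)_1=\frac12 m=\frac12\sum_{k\ge0}k\,p_k$ and some $\delta$. Conversely, if $a(p)\in X_{\alpha,\delta}$ for some $\alpha,\delta$, then $\limsup_{k\to\infty}\sqrt[k]{p_k}<1$.
   Context: $\mathcal M_1^+$ is the set of probability measures on $\mathbb N_0$, identified with nonnegative sequences summing to $1$. For $0<\alpha\le\delta<\infty$, $X_{\alpha,\delta}$ is the set of real sequences $a=(a_k)_{k\ge0}$ with $a_0=1$, $a_1=\alpha$, $0\le a_k\le\delta^k$ for $k\ge2$. *)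

(* Defs.v *)
From Stdlib Require Import Reals.
From Coquelicot Require Import Coquelicot.
Open Scope R_scope.

Definition binom (l k : nat) : R := Binomial.C l k.

Definition is_prob (p : nat -> R) : Prop :=
  (forall k, 0 <= p k) /\ is_series p 1.

Definition kroot (k : nat) (x : R) : R :=
  if Req_EM_T x 0 then 0 else Rpower x (/ INR k).

(** Terms of the series defining a(p)_k : j |-> binom (k+j) k * p (k+j),
    i.e. the sum over l >= k of binom l k * p l. *)
Definition aterm (p : nat -> R) (k : nat) : nat -> R :=
  fun j => binom (k + j)%nat k * p (k + j)%nat.

(** a(p)_k = 1/(k+1) * sum_{l >= k} binom l k p_l  (meaningful when the series converges). *)
Definition a_of (p : nat -> R) (k : nat) : R :=
  / INR (k + 1)%nat * Series (aterm p k).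

Definition in_X (alpha delta : R) (a : nat -> R) : Prop :=
  0 < alpha /\ alpha <= delta /\
  a 0%nat = 1 /\ a 1%nat = alpha /\
  (forall k, (2 <= k)%nat -> 0 <= a k /\ a k <= delta ^ k).

(* Main.v *)
Require Import Defs.
From Stdlib Require Import Reals Lra Lia.
From Coquelicot Require Import Coquelicot.
Open Scope R_scope.

Lemma binom_ge0 n k : 0 <= binom n k.
Proof.
  unfold binom, Binomial.C. apply Rmult_le_pos. apply pos_INR.
  left; apply Rinv_0_lt_compat, Rmult_lt_0_compat; apply INR_fact_lt_0.
Qed.

Lemma sum_term (f : nat -> R) n i : (forall j, 0 <= f j) -> (i <= n)%nat -> f i <= sum_f_R0 f n.
Proof.
  intros Hf Hi. induction n.
  - replace i with 0%nat by lia. simpl; lra.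
  - simpl. destruct (Nat.eq_dec i (S n)) as [->|Hne].
    + assert (0 <= sum_f_R0 f n). { apply cond_pos_sum; auto. } lra.
    + specialize (IHn ltac:(lia)). specialize (Hf (S n)). lra.
Qed.

Lemma term_le_Series (a : nat -> R) n : (forall j, 0 <= a j) -> ex_series a -> a n <= Series a.
Proof.
  intros Ha [l Hl]. rewrite (is_series_unique _ _ Hl).
  apply is_series_Reals in Hl.
  apply Rle_trans with (sum_f_R0 a n). apply sum_term; auto.
  apply sum_incr; auto.
Qed.

Lemma Series_ge0 (a : nat -> R) : (forall j, 0 <= a j) -> ex_series a -> 0 <= Series a.
Proof. intros Ha He. apply Rle_trans with (a 0%nat); auto. apply term_le_Series; auto. Qed.

Lemma binom_bound s k j : 0 < s < 1 -> binom (k + j) k * s ^ k * (1 - s) ^ j <= 1.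
Proof.
  intros Hs. unfold binom.
  assert (H := binomial s (1 - s) (k + j)).
  replace (s + (1 - s)) with 1 in H by ring. rewrite pow1 in H.
  replace j with (k + j - k)%nat at 2 by lia.
  eapply Rle_trans; [|right; symmetry; exact H]. apply (sum_term (fun i => Binomial.C (k + j) i * s ^ i * (1 - s) ^ (k + j - i))).
  - intro i. apply Rmult_le_pos. apply Rmult_le_pos. apply binom_ge0.
    apply pow_le; lra. apply pow_le; lra.
  - lia.
Qed.

Lemma limsup_lt1 (u : nat -> R) : Rbar_lt (LimSup_seq u) 1 ->
  exists r N, 0 < r < 1 /\ forall n, (N <= n)%nat -> u n < r.
Proof.
  unfold LimSup_seq; destruct (ex_LimSup_seq u) as [l Hl]; simpl.
  destruct l as [l| |]; simpl in *; intros H.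
  - assert (He : 0 < (1 - l) / 2) by lra.
    destruct (Hl (mkposreal _ He)) as [_ [N HN]]; simpl in HN.
    exists (Rmax (1/2) (l + (1-l)/2)), N. split.
    + split. apply Rlt_le_trans with (1/2); [lra|apply Rmax_l].
      apply Rmax_lub_lt; lra.
    + intros n Hn. eapply Rlt_le_trans. apply HN; auto. apply Rmax_r.
  - contradiction.
  - destruct (Hl (1/2)) as [N HN]. exists (1/2), N. split; [lra|auto].
Qed.

Lemma kroot_pow n x : (1 <= n)%nat -> 0 < x -> (kroot n x) ^ n = x.
Proof.
  intros Hn Hx. unfold kroot. destruct (Req_EM_T x 0); [lra|].
  rewrite <- Rpower_pow by (unfold Rpower; apply exp_pos).
  rewrite Rpower_mult. rewrite Rinv_l. apply Rpower_1; auto.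
  apply not_0_INR; lia.
Qed.

Lemma prob_le1 p l : is_prob p -> p l <= 1.
Proof.
  intros [Hp Hs]. rewrite <- (is_series_unique _ _ Hs).
  apply term_le_Series; auto. exists 1; auto.
Qed.

Lemma pow_le1 x n : 0 <= x <= 1 -> x ^ n <= 1.
Proof. intros H. rewrite <- (pow1 n). apply pow_incr; lra. Qed.

Lemma pow_anti x m n : 0 <= x <= 1 -> (m <= n)%nat -> x ^ n <= x ^ m.
Proof.
  intros H Hmn. replace n with (m + (n - m))%nat by lia. rewrite pow_add.
  assert (0 <= x ^ m) by (apply pow_le; lra).
  assert (x ^ (n - m) <= 1) by (apply pow_le1; lra).
  assert (0 <= x ^ (n - m)) by (apply pow_le; lra). nra.
Qed.

Lemma kroot_ge0 n x : 0 <= kroot n x.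
Proof. unfold kroot. destruct (Req_EM_T x 0). lra. left; unfold Rpower; apply exp_pos. Qed.

Lemma p_geom p r N : is_prob p -> 0 < r < 1 ->
  (forall n, (N <= n)%nat -> kroot n (p n) < r) ->
  exists K, 1 <= K /\ forall l, p l <= K * r ^ l.
Proof.
  intros Hp Hr HN. set (M := S N).
  assert (HrM : 0 < r ^ M) by (apply pow_lt; lra).
  assert (HrM1 : r ^ M <= 1) by (apply pow_le1; lra).
  assert (HK : 1 <= / r ^ M).
  { rewrite <- Rinv_1. apply Rinv_le_contravar; auto. }
  exists (/ r ^ M). split; auto. intros l.
  assert (Hrl : 0 <= r ^ l) by (apply pow_le; lra).
  destruct (Compare_dec.le_lt_dec M l) as [Hl|Hl].
  - assert (p l <= r ^ l).
    { destruct (proj1 Hp l) as [Hpl|Hpl].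
      + rewrite <- (kroot_pow l (p l)) by (unfold M in *; lia || lra).
        apply pow_incr. split. apply kroot_ge0. left; apply HN; unfold M in *; lia.
      + rewrite <- Hpl; auto. }
    nra.
  - assert (p l <= 1) by (apply prob_le1; auto).
    assert (r ^ M <= r ^ l) by (apply pow_anti; [lra|lia]).
    apply Rle_trans with 1; auto.
    rewrite <- (Rinv_l (r ^ M)) by lra.
    apply Rmult_le_compat_l; auto. left; apply Rinv_0_lt_compat; auto.
Qed.

Lemma aterm_ge0 p k j : (forall l, 0 <= p l) -> 0 <= aterm p k j.
Proof. intros Hp; unfold aterm; apply Rmult_le_pos; [apply binom_ge0|auto]. Qed.

Lemma aterm_bound p K r s k j : 0 < r -> 0 < s < 1 -> 0 <= K ->
  (forall l, p l <= K * r ^ l) ->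
  aterm p k j <= K * (r / s) ^ k * (r / (1 - s)) ^ j.
Proof.
  intros Hr Hs HK Hp. unfold aterm.
  assert (Hb := binom_bound s k j Hs).
  assert (HA : 0 < s ^ k * (1 - s) ^ j) by (apply Rmult_lt_0_compat; apply pow_lt; lra).
  set (A := s ^ k * (1 - s) ^ j) in *.
  assert (HbA : binom (k + j) k <= / A).
  { apply Rmult_le_reg_r with A; auto. rewrite Rinv_l by lra. unfold A; lra. }
  set (X := K * r ^ k * r ^ j).
  assert (HX : 0 <= X) by (unfold X; repeat apply Rmult_le_pos; auto; apply pow_le; lra).
  assert (Hpk : p (k + j)%nat <= X) by (unfold X; rewrite Rmult_assoc, <- pow_add; auto).
  assert (Hbge := binom_ge0 (k + j) k).
  replace (K * (r / s) ^ k * (r / (1 - s)) ^ j) with (/ A * X).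
  2:{ unfold A, X, Rdiv. rewrite !Rpow_mult_distr, !pow_inv.
      rewrite Rinv_mult. ring. }
  apply Rle_trans with (binom (k + j) k * X).
  apply Rmult_le_compat_l; auto. apply Rmult_le_compat_r; auto.
Qed.

Lemma binom_1 n : binom (S n) 1 = INR (S n).
Proof.
  unfold binom. rewrite (pascal_step3 (S n) 0) by lia. rewrite C_n_0.
  replace (S n - 0)%nat with (S n) by lia. simpl INR at 2. field.
Qed.

Lemma binom_0 n : binom n 0 = 1.
Proof. apply C_n_0. Qed.

Lemma forward p (hp : is_prob p) :
  Rbar_lt (LimSup_seq (fun k => kroot k (p k))) 1 ->
     (forall k, ex_series (aterm p k)) /\
     ex_series (fun k => INR k * p k) /\
     a_of p 1 = / 2 * Series (fun k => INR k * p k) /\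
     (p 0%nat < 1 -> exists delta, in_X (a_of p 1) delta (a_of p)).
Proof.
  intros H. destruct (limsup_lt1 _ H) as (r & N & Hr & HN).
  destruct (p_geom p r N hp Hr HN) as (K & HK & HpK).
  destruct hp as [Hp0 Hp1].
  set (s := (1 - r) / 2). set (R := r / s). set (q := r / (1 - s)).
  assert (Hs : 0 < s < 1) by (unfold s; lra).
  assert (Hq : 0 <= q < 1).
  { unfold q. split. apply Rmult_le_pos; [lra|left; apply Rinv_0_lt_compat; lra].
    apply Rmult_lt_reg_r with (1 - s); [lra|]. unfold Rdiv. rewrite Rmult_assoc, Rinv_l by lra.
    unfold s; lra. }
  assert (HR : 0 <= R) by (unfold R; apply Rmult_le_pos; [lra|left; apply Rinv_0_lt_compat; lra]).
  assert (Hgeom : forall k, is_series (fun j => K * R ^ k * q ^ j) (K * R ^ k * / (1 - q))).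
  { intros k. apply (is_series_scal_l (K * R ^ k) (fun j => q ^ j)).
    apply is_series_geom. rewrite Rabs_pos_eq; lra. }
  assert (Hb : forall k j, aterm p k j <= K * R ^ k * q ^ j).
  { intros k j. apply aterm_bound; auto; lra. }
  assert (Hex : forall k, ex_series (aterm p k)).
  { intros k. apply (@ex_series_le R_AbsRing R_CompleteNormedModule _ (fun j => K * R ^ k * q ^ j)).
    - intros j. change (norm (aterm p k j)) with (Rabs (aterm p k j)).
      rewrite Rabs_pos_eq by (apply aterm_ge0; auto). auto.
    - eexists; apply Hgeom. }
  assert (HS : forall k, Series (aterm p k) <= K * R ^ k * / (1 - q)).
  { intros k. rewrite <- (is_series_unique _ _ (Hgeom k)). apply Series_le.
    intros j; split; [apply aterm_ge0; auto|auto]. eexists; apply Hgeom. }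
  assert (Hext1 : forall j, INR (S j) * p (S j) = aterm p 1 j).
  { intros j. unfold aterm. simpl plus. rewrite binom_1. auto. }
  assert (Hex1 : ex_series (fun k => INR k * p k)).
  { apply ex_series_incr_1. eapply ex_series_ext. intros j; symmetry; apply Hext1. auto. }
  assert (Hser1 : Series (fun k => INR k * p k) = Series (aterm p 1)).
  { rewrite Series_incr_1 by auto. simpl INR at 1. rewrite Rmult_0_l, Rplus_0_l.
    apply Series_ext; auto. }
  assert (Ha1 : a_of p 1 = / 2 * Series (fun k => INR k * p k)).
  { unfold a_of. rewrite Hser1. f_equal; f_equal; simpl; ring. }
  split; [|split; [|split]]; auto.
  intros Hp00.
  set (alpha := a_of p 1).
  set (B := K / (1 - q)).
  assert (HB : 1 <= B).
  { unfold B. apply Rmult_le_reg_r with (1 - q); [lra|]. unfold Rdiv.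
    rewrite Rmult_assoc, Rinv_l by lra. nra. }
  assert (Hexp : ex_series p) by (eexists; eauto).
  assert (Halpha : 0 < alpha).
  { unfold alpha, a_of. apply Rmult_lt_0_compat.
    apply Rinv_0_lt_compat; simpl; lra.
    apply Rlt_le_trans with (Series (fun j => p (S j))).
    - pose proof (is_series_unique _ _ Hp1) as E.
      rewrite Series_incr_1 in E by auto. lra.
    - apply Series_le; auto. intros j; split; auto. rewrite <- Hext1.
      rewrite <- (Rmult_1_l (p (S j))) at 1. apply Rmult_le_compat_r; auto.
      rewrite S_INR. pose proof (pos_INR j); lra. }
  exists (Rmax alpha (B * R)). split; [|split; [|split; [|split]]]; auto.
  - apply Rmax_l.
  - unfold a_of. rewrite (Series_ext _ p).
    + rewrite (is_series_unique _ _ Hp1). simpl. field.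
    + intros j. unfold aterm. rewrite binom_0. simpl. ring.
  - intros k Hk.
    assert (HSk := HS k). assert (HS0 : 0 <= Series (aterm p k)).
    { apply Series_ge0; auto. intros; apply aterm_ge0; auto. }
    assert (Hinv : 0 < / INR (k + 1)) by (apply Rinv_0_lt_compat, lt_0_INR; lia).
    assert (Hinv1 : / INR (k + 1) <= 1).
    { rewrite <- Rinv_1. apply Rinv_le_contravar; [lra|]. rewrite plus_INR. simpl.
      pose proof (pos_INR k); lra. }
    unfold a_of. split. apply Rmult_le_pos; lra.
    apply Rle_trans with (Series (aterm p k)). nra.
    apply Rle_trans with (B * R ^ k).
    { unfold B, Rdiv. replace (K * / (1 - q) * R ^ k) with (K * R ^ k * / (1 - q)) by ring. auto. }
    apply Rle_trans with ((B * R) ^ k).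
    { rewrite Rpow_mult_distr. apply Rmult_le_compat_r. apply pow_le; auto.
      rewrite <- (pow_1 B) at 1. apply Rle_pow; auto; lia. }
    apply pow_incr. split. apply Rmult_le_pos; lra. apply Rmax_r.
Qed.

Lemma sum_half L : sum_f_R0 (fun i => INR (i + 1) * (/ 2) ^ i) L = 4 - (INR L + 3) * (/ 2) ^ L.
Proof.
  induction L.
  - simpl. field.
  - rewrite tech5, IHL. replace (INR (S L + 1)) with (INR L + 2) by (rewrite plus_INR, S_INR; simpl; ring). rewrite S_INR. change ((/2)^(S L)) with (/2 * (/2)^L). field.
Qed.

Lemma converse p (hp : is_prob p) :
  ((forall k, ex_series (aterm p k)) /\
     exists alpha delta, in_X alpha delta (a_of p)) ->
     Rbar_lt (LimSup_seq (fun k => kroot k (p k))) 1.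
Proof.
  intros [Hex (alpha & delta & Ha0 & Had & HX0 & HX1 & HXk)].
  destruct hp as [Hp0 Hp1].
  assert (Hd : 0 < delta) by lra.
  assert (Hak : forall k, a_of p k <= delta ^ k).
  { intros [|[|k]]. rewrite HX0; simpl; lra. rewrite HX1; simpl; lra.
    apply HXk; lia. }
  assert (HS : forall k, Series (aterm p k) <= INR (k + 1) * delta ^ k).
  { intros k. assert (Hpos : 0 < INR (k + 1)) by (apply lt_0_INR; lia).
    replace (Series (aterm p k)) with (INR (k + 1) * a_of p k).
    apply Rmult_le_compat_l; [lra|auto].
    unfold a_of. field. lra. }
  assert (Hterm : forall L k, (k <= L)%nat -> binom L k * p L <= INR (k + 1) * delta ^ k).
  { intros L k HkL. eapply Rle_trans; [|apply HS].
    replace (binom L k * p L) with (aterm p k (L - k)).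
    apply term_le_Series; auto. intros; apply aterm_ge0; auto.
    unfold aterm. replace (k + (L - k))%nat with L by lia. auto. }
  set (t := / (2 * delta)).
  assert (Ht : 0 < t) by (apply Rinv_0_lt_compat; lra).
  assert (Htd : t * delta = / 2) by (unfold t; field; lra).
  assert (HpL : forall L, p L * (t + 1) ^ L <= 4).
  { intros L. rewrite binomial. rewrite scal_sum.
    apply Rle_trans with (sum_f_R0 (fun i => INR (i+1) * (/2)^i) L).
    2:{ assert (0 <= (INR L + 3) * (/ 2) ^ L).
        { apply Rmult_le_pos. pose proof (pos_INR L); lra. apply pow_le; lra. }
        rewrite sum_half. lra. }
    apply sum_Rle. intros i Hi. rewrite pow1, Rmult_1_r.
    rewrite <- Htd, Rpow_mult_distr.
    replace (Binomial.C L i * t ^ i * p L) with (t ^ i * (binom L i * p L)) by (unfold binom; ring).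
    replace (INR (i + 1) * (t ^ i * delta ^ i)) with (t ^ i * (INR (i + 1) * delta ^ i)) by ring.
    apply Rmult_le_compat_l. apply pow_le; lra. apply Hterm; lia. }
  set (q := / (t + 1)).
  assert (Hq : 0 < q < 1).
  { unfold q. split. apply Rinv_0_lt_compat; lra.
    rewrite <- Rinv_1. apply Rinv_lt_contravar; lra. }
  assert (Hpq : forall L, p L <= 4 * q ^ L).
  { intros L. assert (E : q ^ L * (t + 1) ^ L = 1).
    { rewrite <- Rpow_mult_distr. unfold q. rewrite Rinv_l by lra. apply pow1. }
    assert (0 <= q ^ L) by (apply pow_le; lra).
    specialize (HpL L).
    replace (p L) with (p L * (t + 1) ^ L * q ^ L).
    apply Rmult_le_compat_r; auto.
    rewrite Rmult_assoc, (Rmult_comm _ (q ^ L)), E. ring. }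
  set (q' := (1 + q) / 2).
  assert (Hq' : q < q' < 1) by (unfold q'; lra).
  destruct (pow_lt_1_zero (q / q')) with (y := / 4) as [N0 HN0].
  { rewrite Rabs_pos_eq. apply Rmult_lt_reg_r with q'; [lra|].
    unfold Rdiv. rewrite Rmult_assoc, Rinv_l by lra. lra.
    apply Rmult_le_pos; [lra|left; apply Rinv_0_lt_compat; lra]. }
  { lra. }
  assert (Hev : forall n, (max N0 1 <= n)%nat -> kroot n (p n) <= q').
  { intros n Hn.
    assert (Hb : p n <= q' ^ n).
    { eapply Rle_trans. apply Hpq.
      specialize (HN0 n ltac:(lia)). rewrite Rabs_pos_eq in HN0.
      2:{ apply pow_le. apply Rmult_le_pos; [lra|left; apply Rinv_0_lt_compat; lra]. }
      replace (q ^ n) with ((q / q') ^ n * q' ^ n).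
      assert (0 < q' ^ n) by (apply pow_lt; lra). nra.
      rewrite <- Rpow_mult_distr. f_equal. field. lra. }
    unfold kroot. destruct (Req_EM_T (p n) 0). lra.
    assert (Hpn : 0 < p n) by (destruct (Hp0 n); auto; congruence).
    assert (HnR : 0 < INR n) by (apply lt_0_INR; lia).
    apply Rle_trans with (Rpower (q' ^ n) (/ INR n)).
    apply Rle_Rpower_l. left; apply Rinv_0_lt_compat; auto. split; auto.
    rewrite <- Rpower_pow by lra. rewrite Rpower_mult, Rinv_r by lra.
    rewrite Rpower_1 by lra. lra. }
  assert (HL : Rbar_le (LimSup_seq (fun k => kroot k (p k))) (LimSup_seq (fun _ => q'))).
  { apply LimSup_le. exists (max N0 1). apply Hev. }
  rewrite (is_LimSup_seq_unique _ _ (is_LimSup_seq_const q')) in HL.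
  destruct (LimSup_seq (fun k => kroot k (p k))); simpl in *; auto; lra.
Qed.

Theorem proposition6 (p : nat -> R) (hp : is_prob p) :
  (Rbar_lt (LimSup_seq (fun k => kroot k (p k))) 1 ->
     (forall k, ex_series (aterm p k)) /\
     ex_series (fun k => INR k * p k) /\
     a_of p 1 = / 2 * Series (fun k => INR k * p k) /\
     (p 0%nat < 1 -> exists delta, in_X (a_of p 1) delta (a_of p)))
  /\
  (((forall k, ex_series (aterm p k)) /\
     exists alpha delta, in_X alpha delta (a_of p)) ->
     Rbar_lt (LimSup_seq (fun k => kroot k (p k))) 1).
Proof.
  split; [apply forward | apply converse]; auto.
Qed.
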